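(* Let $k=\delta n$ with $\delta = \omega(\log^{-1/3} n)$, let $G = (X\dot\cup Y,E)$ be a $k$-regular bipartite graph on $2n$ vertices, let $(S,T)$ be a cut of $G$, and let $V' = V\setminus \Gamma(S,T)$. Let $G_1\sim G(p_1)$ with $p_1 = \frac{\log n - \log\log\log\log n}{k}$. Then, w.v.h.p., every $x\in V'$ satisfies $\deg^{\mathrm{Cr}}_{G_1}(x)\le 30$.
   Context: $V = X\cup Y$. A cut is a pair $(S,T)$ with $S\subseteq X$, $T\subseteq Y$; cross edges w.r.t. $(S,T)$ are edges joining $S$ to $Y\setminus T$ or $X\setminus S$ to $T$. $\deg^{\mathrm{Cr}}_{H}(x)$ denotes the number of cross edges of the subgraph $H$ incident to $x$. $\Gamma(S,T) = \{x\in V : \deg^{\mathrm{Cr}}_{G}(x) \ge n^{-1/20}k\}$. $G(p)$ retains each edge of $G$ independently with probability $p$. A sequence of events $A_n$ holds with very high probability (w.v.h.p.) if $\log(\mathbb P[A_n^c]) = -\Omega(\log n)$. *)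

(* Defs.v *)
From HB Require Import structures.
From mathcomp Require Import all_boot all_order all_algebra.
From mathcomp Require Import reals sequences exp.
Set Implicit Arguments. Unset Strict Implicit. Unset Printing Implicit Defensive.
Import Order.TTheory GRing.Theory Num.Theory.
Local Open Scope ring_scope.

(* Bipartite graph on X = 'I_n (inl) and Y = 'I_n (inr); an edge set is a
   set of pairs (x, y) with x in X, y in Y. *)
Definition vert (n : nat) := ('I_n + 'I_n)%type.
Definition edges (n : nat) := {set 'I_n * 'I_n}.

Definition regular_bip (n k : nat) (E : edges n) : Prop :=
  (forall x : 'I_n, #|[set e in E | e.1 == x]| = k) /\
  (forall y : 'I_n, #|[set e in E | e.2 == y]| = k).

Definition cross (n : nat) (S T : {set 'I_n}) (e : 'I_n * 'I_n) : bool :=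
  ((e.1 \in S) && (e.2 \notin T)) || ((e.1 \notin S) && (e.2 \in T)).

Definition incident (n : nat) (v : vert n) (e : 'I_n * 'I_n) : bool :=
  match v with inl x => e.1 == x | inr y => e.2 == y end.

Definition crdeg (n : nat) (S T : {set 'I_n}) (H : edges n) (v : vert n) : nat :=
  #|[set e in H | cross S T e && incident v e]|.

Definition Gamma (R : realType) (n k : nat) (E : edges n) (S T : {set 'I_n})
  (v : vert n) : bool :=
  (n%:R `^ (- (20%:R)^-1) * k%:R <= (crdeg S T E v)%:R :> R).

(* Probability under G(p) (each edge of E kept independently with prob. p)
   of the event A (a predicate on subgraphs H of E). *)
Definition Gp_prob (R : realType) (n : nat) (E : edges n) (p : R)
  (A : pred (edges n)) : R :=
  \sum_(H : edges n | (H \subset E) && A H) p ^+ #|H| * (1 - p) ^+ #|E :\: H|.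

Definition p1 (R : realType) (n k : nat) : R :=
  (ln (n%:R : R) - ln (ln (ln (ln (n%:R : R))))) / k%:R.

Definition bad (R : realType) (n k : nat) (E : edges n) (S T : {set 'I_n})
  (H : edges n) : bool :=
  [exists v : vert n, ~~ Gamma R k E S T v && (30 < crdeg S T H v)%N].

(* Main.v *)
Require Import Defs.
From HB Require Import structures.
From mathcomp Require Import all_boot all_order all_algebra.
From mathcomp Require Import reals sequences exp.
From mathcomp Require Import ring lra.
Import Order.TTheory GRing.Theory Num.Theory.
Local Open Scope ring_scope.

Section Comb.
Variables (R : realType) (n : nat) (E : edges n) (p : R).

Lemma marg (F0 : edges n) : F0 \subset E ->
  Gp_prob E p (fun H => F0 \subset H) = p ^+ #|F0|.
Proof.
move=> F0E; rewrite /Gp_prob.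
pose f (i : 'I_n * 'I_n) := if i \in E then p else 0.
pose g (i : 'I_n * 'I_n) := if i \in E then (if i \in F0 then 0 else 1 - p) else 1.
have tot : \prod_i (f i + g i) = p ^+ #|F0|.
  rewrite -prodr_const [RHS]big_mkcond /=; apply: eq_bigr => i _.
  rewrite /f /g; case: ifP => iE; case: ifP => iF //.
  - by rewrite addr0.
  - by rewrite addrC subrK.
  - by rewrite (subsetP F0E) in iE.
  - by rewrite add0r.
have key : forall J : edges n, \prod_i (if i \in J then f i else g i) =
   if (J \subset E) && (F0 \subset J) then p ^+ #|J| * (1-p)^+#|E :\: J| else 0.
  move=> J; case: (boolP (J \subset E)) => JE /=; last first.
    case/subsetPn: JE => i iJ iE.
    by rewrite (bigD1 i) //= iJ /f (negbTE iE) mul0r.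
  case: (boolP (F0 \subset J)) => FJ /=; last first.
    case/subsetPn: FJ => i iF iJ.
    by rewrite (bigD1 i) //= (negbTE iJ) /g (subsetP F0E _ iF) iF mul0r.
  rewrite (bigID (mem J)) /=; congr (_ * _).
    rewrite -prodr_const; apply: eq_bigr => i iJ.
    by rewrite iJ /f (subsetP JE _ iJ).
  rewrite -prodr_const.
  under eq_bigr => i iJ.
    rewrite (negbTE iJ) /g.
    have -> : (i \in F0) = false.
      by apply/negP => iF; rewrite (subsetP FJ _ iF) in iJ.
    over.
  rewrite -big_mkcondr /=; apply: eq_bigl => i.
  by rewrite !inE andbC.
rewrite big_mkcond /= -tot bigA_distr.
apply: eq_bigr => J _; by rewrite key.
Qed.

Lemma le_sum_term (I : finType) (P : pred I) (f : I -> R) i :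
  P i -> (forall j, P j -> 0 <= f j) -> f i <= \sum_(j | P j) f j.
Proof.
move=> Pi f0; rewrite (bigD1 i) //= lerDl sumr_ge0 // => j /andP[Pj _].
exact: f0.
Qed.

Definition Cv (S T : {set 'I_n}) (v : vert n) : edges n :=
  [set e in E | cross S T e && incident v e].

Lemma bad_bound (k : nat) (S T : {set 'I_n}) : 0 <= p <= 1 ->
  Gp_prob E p (bad R k E S T) <=
  \sum_(v : vert n) (if Gamma R k E S T v then 0 else ('C(#|Cv S T v|, 31))%:R * p ^+ 31).
Proof.
case/andP=> p0 p1.
have w0 : forall H : edges n, 0 <= p ^+ #|H| * (1 - p) ^+ #|E :\: H|.
  by move=> H; rewrite mulr_ge0 // exprn_ge0 // subr_ge0.
pose Q v (F : edges n) := ~~ Gamma R k E S T v && (F \subset Cv S T v) && (#|F| == 31)%N.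
have -> : \sum_(v : vert n) (if Gamma R k E S T v then 0 else ('C(#|Cv S T v|, 31))%:R * p ^+ 31)
   = \sum_(v : vert n) \sum_(F | Q v F) p ^+ 31.
  apply: eq_bigr => v _.
  rewrite (eq_bigl (mem [set F | Q v F])); last by move=> F; rewrite !inE.
  rewrite sumr_const /Q; case: (Gamma R k E S T v) => /=.
    by rewrite (_ : [set F | false] = set0) ?cards0 // ; apply/setP => F; rewrite !inE.
  by rewrite cards_draws mulr_natl.
rewrite /Gp_prob big_mkcondr /=.
apply: (@le_trans _ _ (\sum_(H : edges n | H \subset E) \sum_(v : vert n) \sum_(F | Q v F)
     (if F \subset H then p ^+ #|H| * (1 - p) ^+ #|E :\: H| else 0))).
  apply: ler_sum => H HE.
  case: ifP => [/existsP [v /andP [nG lt30]] | _]; last first.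
    by apply: sumr_ge0 => v _; apply: sumr_ge0 => F _; case: ifP.
  set D := [set e in H | cross S T e && incident v e].
  have : (0 < #|[set F : edges n | F \subset D & #|F| == 31]|)%N.
    by rewrite cards_draws bin_gt0.
  case/card_gt0P => F; rewrite inE => /andP [FD /eqP F31].
  have FH : F \subset H.
    by apply: subset_trans FD _; apply/subsetP => e; rewrite inE => /andP[].
  have QF : Q v F.
    rewrite /Q nG F31 eqxx andbT /=.
    apply: subset_trans FD _; apply/subsetP => e; rewrite !inE => /andP[eH ->].
    by rewrite (subsetP HE _ eH).
  apply: le_trans _ (le_sum_term _ (fun _ => true)  (fun u => \sum_(F0 | Q u F0) (if F0 \subset H then p ^+ #|H| * (1 - p) ^+ #|E :\: H| else 0)) v _ _); last first.
    by move=> u _; apply: sumr_ge0 => F' _; case: ifP.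
  rewrite /=; first by [].
  apply: le_trans _ (le_sum_term _ (Q v) (fun F0 => (if F0 \subset H then p ^+ #|H| * (1 - p) ^+ #|E :\: H| else 0)) F _ _) => //=; last first.
    by move=> F' _; case: ifP.
  by rewrite FH.
rewrite exchange_big /=; apply: ler_sum => v _.
rewrite exchange_big /=; apply: ler_sum => F QF.
rewrite -big_mkcondr /=.
case/andP: QF => /andP[_ FC] /eqP F31.
have := marg F; rewrite /Gp_prob => -> ; rewrite ?F31 //.
apply: subset_trans FC _; apply/subsetP => e; rewrite inE => /andP[].
done.
Qed.
End Comb.
Section Ana.
Variable R : realType.

Lemma ln_le_id (x : R) : 0 < x -> ln x <= x.
Proof.
move=> x0; have := expR_ge1Dx (ln x); rewrite lnK ?posrE //.
move=> h; lra.
Qed.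

Lemma large_ln (b : R) : exists N : nat, forall n : nat, (N <= n)%N ->
  (0 < n)%N /\ b <= ln (n%:R : R).
Proof.
exists (Num.truncn (expR b)).+1 => n hn; split.
  exact: leq_trans hn.
have h1 : expR b < n%:R.
  apply: lt_le_trans (truncnS_gt _) _; by rewrite ler_nat.
rewrite -{1}(expRK b) ler_ln ?posrE ?expR_gt0 //.
- exact: ltW.
- exact: lt_trans (expR_gt0 b) h1.
Qed.

Lemma final_ineq_gen (L : R) (f : nat) : (0 < f)%N ->
  1 + (L / 2) ^+ 32 / f%:R <= expR (L / 2) ->
  2 * (2 ^+ 32 * f%:R) <= L ->
  2 * expR L * (expR (- (20%:R)^-1 * L) * L) ^+ 31 <= expR (- ((20%:R)^-1 * L)).
Proof.
move=> f0 hexp KL.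
set K := (2 ^+ 32 * f%:R : R).
have K0 : 0 < K by rewrite /K mulr_gt0 ?exprn_gt0 ?ltr0n.
have L0 : 0 <= L by apply: le_trans KL; rewrite mulr_ge0 ?ltW.
have e : - ((20%:R)^-1 * L) = L / 2 + (L + 31%:R * (- (20%:R)^-1 * L)).
  by field.
rewrite e expRD exprMn -expRM_natl.
rewrite (mulrC (expR (L / 2))).
have -> : 2 * expR L * (expR (31%:R * (- (20%:R)^-1 * L)) * L ^+ 31)
   = (expR (L + 31%:R * (- (20%:R)^-1 * L))) * (2 * L ^+ 31).
  by rewrite expRD; ring.
rewrite ler_pM2l ?expR_gt0 //.
apply: le_trans hexp.
have -> : (L / 2) ^+ 32 / f%:R = L ^+ 31 * (L / K).
  rewrite /K expr_div_n exprSr; field.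
  by rewrite pnatr_eq0 -lt0n.
have hLK : 2 <= L / K by rewrite ler_pdivlMr.
have hL31 : 0 <= L ^+ 31 by rewrite exprn_ge0.
have := ler_wpM2l hL31 hLK; lra.
Qed.
End Ana.

Lemma bin_le_exp d m : ('C(d, m) <= d ^ m)%N.
Proof.
apply: leq_trans (leq_pmulr _ (fact_gt0 m)) _.
rewrite bin_ffact.
have h : forall a b e, (a <= b)%N -> (a ^ e <= b ^ e)%N.
  by move=> a b [|e] ab //; rewrite leq_exp2r.
elim: m d => [|m IH] d; first by [].
rewrite ffactnS expnS leq_mul //.
apply: leq_trans (IH _) _; apply: h; exact: leq_pred.
Qed.

Theorem lemma3p4 (R : realType) (k : nat -> nat)
  (G : forall n : nat, edges n) (S T : forall n : nat, {set 'I_n}) :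
  (* delta_n = k_n / n = omega(log^{-1/3} n) *)
  (forall M : R, exists N : nat, forall n : nat, (N <= n)%N ->
     M <= ((k n)%:R / n%:R) / (ln (n%:R : R)) `^ (- (3%:R)^-1)) ->
  (forall n : nat, regular_bip (k n) (G n)) ->
  (* w.v.h.p.: log P[failure] <= - c log n for large n *)
  exists c : R, 0 < c /\ exists N : nat, forall n : nat, (N <= n)%N ->
    Gp_prob (G n) (p1 R n (k n)) (bad R (k n) (G n) (S n) (T n))
      <= expR (- (c * ln (n%:R : R))).
Proof.
move=> Hk Hreg.
exists (20%:R)^-1; split; first by rewrite invr_gt0 ltr0n.
have [f [f0 hf]] : exists f : nat, (0 < f)%N /\
    forall L : R, 0 <= L -> 1 + (L / 2) ^+ 32 / f%:R <= expR (L / 2).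
  exists (31.+1)`!; split; first exact: fact_gt0.
  move=> L L0; apply: expR_ge1Dxn; rewrite divr_ge0 //.
have hK0 : 0 <= 2 * (2 ^+ 32 * f%:R) :> R by rewrite mulr_ge0 // mulr_ge0 // exprn_ge0.
pose b : R := 2 * (2 ^+ 32 * f%:R) + expR (expR 1) + 3.
have [N1 HN1] := large_ln _ b.
have [N2 HN2] := Hk 1.
exists (maxn N1 N2) => n hn.
have [n0 hL] := HN1 n (leq_trans (leq_maxl _ _) hn).
have hk := HN2 n (leq_trans (leq_maxr _ _) hn).
set x : R := n%:R in hL hk *.
set L := ln x in hL hk *.
set kR : R := (k n)%:R in hk *.
have x0 : 0 < x by rewrite ltr0n.
have xE : x = expR L by rewrite /L lnK ?posrE.
have hee := @expR_ge0 R (expR 1).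
have hb1 : 2 * (2 ^+ 32 * f%:R) <= L by rewrite /b in hL; lra.
have hb2 : expR (expR 1) <= L by rewrite /b in hL; lra.
have hb3 : 3 <= L by rewrite /b in hL; lra.
have L0 : 0 < L by lra.
have hkL : L <= kR.
  have hpow : L `^ (- (3%:R)^-1) = expR (- (3%:R)^-1 * ln L) by rewrite /powR gt_eqF.
  rewrite hpow ler_pdivlMr ?expR_gt0 // mul1r ler_pdivlMr // in hk.
  have h1 : expR (- (3%:R)^-1 * L) <= expR (- (3%:R)^-1 * ln L).
    by rewrite ler_expR; have := ln_le_id _ _ L0; lra.
  have h2 : expR (- (3%:R)^-1 * L + L) <= kR.
    rewrite expRD -xE; apply: le_trans hk; rewrite ler_wpM2r //; exact: ltW.
  have y0 : 0 <= - (3%:R)^-1 * L + L by lra.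
  have h3 := expR_ge1Dxn 1 y0.
  have e2 : (1.+1)`!%:R = 2 :> R by [].
  rewrite e2 in h3.
  set y := - (3%:R)^-1 * L + L in y0 h2 h3.
  have yE : y = (2%:R / 3%:R) * L by rewrite /y; field.
  have : L <= 1 + y ^+ 2 / 2.
    rewrite yE; have : 0 <= (L - 3) * L by rewrite mulr_ge0 //; lra.
    move=> h; rewrite expr2; nra.
  lra.
have k0 : 0 < kR by lra.
set p := p1 R n (k n).
have pE : p = (L - ln (ln (ln L))) / kR by [].
have lL1 : expR 1 <= ln L.
  rewrite -(expRK (expR 1)) ler_ln ?posrE ?expR_gt0 //; lra.
have llL1 : 1 <= ln (ln L).
  rewrite -(expRK 1) ler_ln ?posrE ?expR_gt0 //; have := @expR_gt0 R 1; lra.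
have l40 : 0 <= ln (ln (ln L)) by apply: ln_ge0.
have l4L : ln (ln (ln L)) <= L.
  have a1 := ln_le_id _ (ln (ln L)) ltac:(lra).
  have a2 := ln_le_id _ (ln L) ltac:(have := @expR_gt0 R 1; lra).
  have a3 := ln_le_id _ _ L0.
  lra.
have p0 : 0 <= p by rewrite pE divr_ge0 //; lra.
have p1le : p <= 1 by rewrite pE ler_pdivrMr // mul1r; lra.
have pk : p * kR <= L by rewrite pE mulrVK ?unitfE ?gt_eqF //; lra.
set q := x `^ (- (20%:R)^-1).
have qE : q = expR (- (20%:R)^-1 * L) by rewrite /q /powR gt_eqF.
have q0 : 0 <= q by rewrite qE expR_ge0.
have HB := @bad_bound R n (G n) p (k n) (S n) (T n) ltac:(by rewrite p0 p1le).
apply: le_trans HB _.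
apply: (@le_trans _ _ (\sum_(v : vert n) (q * L) ^+ 31)).
  apply: ler_sum => v _.
  case: ifP => hG.
    by rewrite exprn_ge0 // mulr_ge0 //; apply: ltW.
  have hd : ((#|Cv n (G n) (S n) (T n) v|)%:R : R) < q * kR.
    by move/negbT: hG; rewrite /Gamma -ltNge.
  set d := #|Cv n (G n) (S n) (T n) v| in hd *.
  have hC : ('C(d, 31))%:R <= (d%:R : R) ^+ 31 by rewrite -natrX ler_nat bin_le_exp.
  apply: le_trans (_ : (d%:R : R) ^+ 31 * p ^+ 31 <= _).
    by rewrite ler_wpM2r // exprn_ge0.
  rewrite -exprMn; apply: lerXn2r; rewrite ?nnegrE.
  - by apply: mulr_ge0 => //; apply: ler0n.
  - by apply: mulr_ge0 => //; apply: ltW.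
  apply: le_trans (_ : q * kR * p <= _).
    by rewrite ler_wpM2r //; apply: ltW.
  by rewrite -mulrA ler_wpM2l // mulrC.
rewrite sumr_const card_sum !card_ord -[_ *+ (n + n)]mulr_natl natrD -/x.
rewrite qE xE.
have -> : expR L + expR L = 2 * expR L by ring.
apply: (@final_ineq_gen R L f f0 _ hb1).
apply: hf; lra.
Qed.
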